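(* Consider an equation system $X=_\mu F$ where $F$ is a quantitative formula possibly containing $\min$. Suppose there are $u\in\mathbb{E}(D)$ with $[\![F^{\max}]\!](u)\le u$, a function $r\colon D\to[0,\infty)$ with $[\![\mathsf{D}(F^{\max})]\!](r)+u\le r$, and $\eta\in\mathbb{E}(D)$ with $\eta\le u$ and $[\![F]\!](\eta)\ge\eta$. Then $\eta$ is a lower bound of the least fixed point of $[\![F]\!]$, i.e. $\eta\le\mu[\![F]\!]$.
   Context: $\mathbb{E}(D)$ is the set of functions $D\to[0,\infty]$ with pointwise order and operations ($\infty+x=\infty$, $0\cdot\infty=0$, $r\cdot\infty=\infty$ for $r>0$). Quantitative formulas over a predicate variable $X$ (of type $D\to\Omega$) with minimum are: $F ::= X(\tilde e)\mid t\mid F_1+F_2\mid t\cdot F\mid \mathbf{if}\ \varphi\ \mathbf{then}\ F_1\ \mathbf{else}\ F_2\mid\min\{F_1,\dots,F_n\}$, with $\tilde e$ expressions, $t$ a $[0,\infty)$-valued term, $\varphi$ boolean; interpreted as maps $\mathbb{E}(D)\to\mathbb{E}(D)$ by $[\![X(e)]\!](\eta)(v)=\eta([\![e]\!](v))$, $[\![t]\!](\eta)(v)=[\![t]\!](v)$, pointwise sum and scalar product, case distinction for conditionals, and pointwise minimum for $\min$. $F^{\max}$ is obtained from $F$ by replacing every $\min$ by $\max$ (interpreted as pointwise maximum). $\mathsf{D}F$ is defined syntactically: $\mathsf{D}(X(\tilde e))=X(\tilde e)$, $\mathsf{D}t=0$, $\mathsf{D}(F_1+F_2)=\mathsf{D}F_1+\mathsf{D}F_2$,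 $\mathsf{D}(t\cdot F)=t\cdot\mathsf{D}F$, $\mathsf{D}(\mathbf{if}\ \varphi\ \mathbf{then}\ F_1\ \mathbf{else}\ F_2)=\mathbf{if}\ \varphi\ \mathbf{then}\ \mathsf{D}F_1\ \mathbf{else}\ \mathsf{D}F_2$, $\mathsf{D}(\min\{F_1,\dots,F_n\})=\min\{\mathsf{D}F_1,\dots,\mathsf{D}F_n\}$ (and likewise for $\max$). *)

(* Defs.v *)
From HB Require Import structures.
From mathcomp Require Import all_boot all_order all_algebra.
From mathcomp Require Import boolp classical_sets reals constructive_ereal ereal.
Set Implicit Arguments. Unset Strict Implicit. Unset Printing Implicit Defensive.
Import Order.TTheory GRing.Theory Num.Theory.
Local Open Scope ring_scope.
Local Open Scope classical_set_scope.
Definition nng0 (R : realType) : {nonneg R} := 0%:nng.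
Local Open Scope ereal_scope.

(* Quantitative formulas over one predicate variable X : D -> Omega.
   Expressions e are interpreted directly as maps D -> D, terms t as maps
   D -> [0,oo) ({nonneg R}), boolean guards phi as maps D -> bool.
   Fmin/Fmax are binary; the n-ary min{F1,..,Fn} (n >= 1) is a nesting. *)
Inductive qform (R : realType) (D : Type) : Type :=
| FX     : (D -> D) -> qform R D
| Fconst : (D -> {nonneg R}) -> qform R D
| Fadd   : qform R D -> qform R D -> qform R D
| Fscale : (D -> {nonneg R}) -> qform R D -> qform R D
| Fite   : (D -> bool) -> qform R D -> qform R D -> qform R D
| Fmin   : qform R D -> qform R D -> qform R D
| Fmax   : qform R D -> qform R D -> qform R D.

Arguments FX {R D}. Arguments Fconst {R D}. Arguments Fadd {R D}.
Arguments Fscale {R D}. Arguments Fite {R D}. Arguments Fmin {R D}.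
Arguments Fmax {R D}.

(* Semantics: a map E(D) -> E(D), with E(D) = D -> [0,oo] realised as
   D -> \bar R (values are nonnegative on nonnegative arguments). *)
Fixpoint sem (R : realType) (D : Type) (F : qform R D) (eta : D -> \bar R)
  : D -> \bar R :=
  match F with
  | FX e => fun v => eta (e v)
  | Fconst t => fun v => ((t v)%:num)%:E
  | Fadd F1 F2 => fun v => sem F1 eta v + sem F2 eta v
  | Fscale t F1 => fun v => ((t v)%:num)%:E * sem F1 eta v
  | Fite phi F1 F2 => fun v => if phi v then sem F1 eta v else sem F2 eta v
  | Fmin F1 F2 => fun v => Order.min (sem F1 eta v) (sem F2 eta v)
  | Fmax F1 F2 => fun v => Order.max (sem F1 eta v) (sem F2 eta v)
  end.

Fixpoint fmax (R : realType) (D : Type) (F : qform R D) : qform R D :=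
  match F with
  | FX e => FX e
  | Fconst t => Fconst t
  | Fadd F1 F2 => Fadd (fmax F1) (fmax F2)
  | Fscale t F1 => Fscale t (fmax F1)
  | Fite phi F1 F2 => Fite phi (fmax F1) (fmax F2)
  | Fmin F1 F2 => Fmax (fmax F1) (fmax F2)
  | Fmax F1 F2 => Fmax (fmax F1) (fmax F2)
  end.

Fixpoint fderiv (R : realType) (D : Type) (F : qform R D) : qform R D :=
  match F with
  | FX e => FX e
  | Fconst _ => Fconst (fun _ => nng0 R)
  | Fadd F1 F2 => Fadd (fderiv F1) (fderiv F2)
  | Fscale t F1 => Fscale t (fderiv F1)
  | Fite phi F1 F2 => Fite phi (fderiv F1) (fderiv F2)
  | Fmin F1 F2 => Fmin (fderiv F1) (fderiv F2)
  | Fmax F1 F2 => Fmax (fderiv F1) (fderiv F2)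
  end.

(* F is built from the grammar of the paper (possibly with min, no max) *)
Fixpoint max_free (R : realType) (D : Type) (F : qform R D) : Prop :=
  match F with
  | FX _ | Fconst _ => True
  | Fadd F1 F2 | Fite _ F1 F2 | Fmin F1 F2 => max_free F1 /\ max_free F2
  | Fscale _ F1 => max_free F1
  | Fmax _ _ => False
  end.

Definition inED (R : realType) (D : Type) (f : D -> \bar R) : Prop :=
  forall v, 0 <= f v.

Definition ple (R : realType) (D : Type) (f g : D -> \bar R) : Prop :=
  forall v, f v <= g v.

(* Least fixed point of a monotone map on the complete lattice E(D)
   (Knaster-Tarski): pointwise infimum of all prefixed points. *)
Definition lfp (R : realType) (D : Type) (phi : (D -> \bar R) -> D -> \bar R)
  : D -> \bar R :=
  fun v => ereal_inf [set g v | g in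
             [set g : D -> \bar R | inED g /\ ple (phi g) g]].

(* Main.v *)
Require Import Defs.
From mathcomp Require Import all_boot all_order all_algebra.
From mathcomp Require Import boolp classical_sets reals constructive_ereal ereal.
From mathcomp Require Import lra.
Import Order.TTheory GRing.Theory Num.Theory.
Local Open Scope ring_scope.
Local Open Scope ereal_scope.

Lemma sem_ge0 (R : realType) (D : Type) (G : qform R D) (x : D -> \bar R) :
  inED x -> inED (sem G x).
Proof.
move=> hx; elim: G => [e|t|G1 IH1 G2 IH2|t G1 IH1|p G1 IH1 G2 IH2|G1 IH1 G2 IH2|G1 IH1 G2 IH2] v /=.
- exact: hx.
- by rewrite lee_fin.
- exact: adde_ge0.
- by apply: mule_ge0; rewrite ?lee_fin.
- by case: (p v).
- by rewrite le_min IH1 IH2.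
- by rewrite le_max IH1.
Qed.

Arguments sem_ge0 {R D} G {x}.
Lemma key (R : realType) (D : Type) (G : qform R D) (x y d : D -> \bar R) :
  inED x -> inED y -> inED d -> ple x (fun v => y v + d v) ->
  ple (sem G x) (fun v => sem G y v + sem (fderiv (fmax G)) d v).
Proof.
move=> hx hy hd hxy.
elim: G => [e|t|G1 IH1 G2 IH2|t G1 IH1|p G1 IH1 G2 IH2|G1 IH1 G2 IH2|G1 IH1 G2 IH2] v /=.
- exact: hxy.
- by rewrite adde0.
- by rewrite addeACA; apply: leeD.
- rewrite -ge0_muleDr; [|exact: sem_ge0|exact: sem_ge0]; apply: lee_wpmul2l; first by rewrite lee_fin.
  exact: IH1.
- by case: (p v).
- have [h|h] := leP (sem G1 y v) (sem G2 y v).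
  + rewrite ge_min; apply/orP; left.
    apply: le_trans (IH1 v) _; apply: leeD; rewrite ?le_max ?lexx ?orbT //.
  + rewrite ge_min; apply/orP; right.
    apply: le_trans (IH2 v) _; apply: leeD; rewrite ?le_max ?lexx ?orbT //.
- rewrite ge_max; apply/andP; split.
  + apply: le_trans (IH1 v) _; apply: leeD; rewrite le_max lexx ?orbT //.
  + apply: le_trans (IH2 v) _; apply: leeD; rewrite le_max lexx ?orbT //.
Qed.

Arguments key {R D} G {x y d}.
Lemma hom (R : realType) (D : Type) (G : qform R D) (x : D -> \bar R) (c : R) :
  inED x -> (0 <= c)%R ->
  ple (sem (fderiv G) (fun w => c%:E * x w)) (fun v => c%:E * sem (fderiv G) x v).
Proof.
move=> hx hc; have hc' : 0 <= c%:E by rewrite lee_fin.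
elim: G => [e|t|G1 IH1 G2 IH2|t G1 IH1|p G1 IH1 G2 IH2|G1 IH1 G2 IH2|G1 IH1 G2 IH2] v /=.
- by [].
- by rewrite mule0.
- rewrite ge0_muleDr; [|exact: sem_ge0|exact: sem_ge0]; exact: leeD.
- rewrite muleCA; apply: lee_wpmul2l; first by rewrite lee_fin.
  exact: IH1.
- by case: (p v).
- have [h|h] := leP (sem (fderiv G1) x v) (sem (fderiv G2) x v).
  + by rewrite ge_min IH1.
  + by rewrite ge_min IH2 orbT.
- rewrite ge_max; apply/andP; split.
  + apply: le_trans (IH1 v) _; apply: lee_wpmul2l => //; rewrite le_max lexx //.
  + apply: le_trans (IH2 v) _; apply: lee_wpmul2l => //; rewrite le_max lexx orbT //.
Qed.

Arguments hom {R D} G {x c}.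
Lemma fin_between (R : realType) (x : \bar R) (b : R) :
  0 <= x -> x <= b%:E -> exists a : R, x = a%:E.
Proof. by case: x => [a| |] //; eauto. Qed.

Arguments fin_between {R x b}.
Theorem theoremE4 (R : realType) (D : Type) (F : qform R D)
  (u : D -> \bar R) (r : D -> {nonneg R}) (eta : D -> \bar R) :
  max_free F ->
  inED u ->
  ple (sem (fmax F) u) u ->
  ple (fun v => sem (fderiv (fmax F)) (fun w => ((r w)%:num)%:E) v + u v)
      (fun v => ((r v)%:num)%:E) ->
  inED eta ->
  ple eta u ->
  ple eta (sem F eta) ->
  ple eta (lfp (sem F)).
Proof.
move=> _ hu hFu hr heta hetau hFeta v.
apply/ereal_infP => _ [g [hg hFg] <-].
have hr0 : inED (fun w => ((r w)%:num)%:E) by move=> w; rewrite lee_fin.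
have hur : forall w, u w <= ((r w)%:num)%:E.
  move=> w; apply: le_trans (hr w); apply: leeDr; exact: sem_ge0.
have main : forall n w, eta w <= g w + (((r w)%:num) / n.+1%:R)%:E.
  elim=> [|n IH] w.
    rewrite divr1; apply: le_trans (hetau w) _; apply: le_trans (hur w) _.
    exact: leeDr.
  set k : R := n.+1%:R.
  have k0 : (0 < k)%R by rewrite ltr0n.
  pose d := fun w => ((k^-1)%R%:E * ((r w)%:num)%:E).
  have hd : inED d by move=> z; apply: mule_ge0; [rewrite lee_fin invr_ge0 ltW | rewrite lee_fin].
  have IH' : ple eta (fun z => g z + d z).
    by move=> z; rewrite /d -EFinM mulrC; exact: IH.
  have K := key F heta hg hd IH' w.
  have H1 : eta w <= g w + (k^-1)%R%:E * sem (fderiv (fmax F)) (fun w => ((r w)%:num)%:E) w.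
    apply: le_trans (hFeta w) _; apply: le_trans K _; apply: leeD; first exact: hFg.
    apply: hom => //; by rewrite invr_ge0 ltW.
  have Sr0 := sem_ge0 (fderiv (fmax F)) hr0 w.
  have H2 := hr w; move: H1 H2.
  have hS : sem (fderiv (fmax F)) (fun w => ((r w)%:num)%:E) w <= ((r w)%:num)%:E.
    apply: le_trans (hr w); apply: leeDl; exact: hu.
  have [s Es] := fin_between Sr0 hS; rewrite Es in Sr0 *.
  have [a Ea] := fin_between (hu w) (hur w); rewrite Ea.
  have [e Ee] := fin_between (heta w) (le_trans (hetau w) (hur w)); rewrite Ee.
  have hea : e%:E <= a%:E by rewrite -Ee -Ea.
  have e0 : 0 <= e%:E by rewrite -Ee.
  have s0 := Sr0.
  move: (hg w); case: (g w) => [G| |] //.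
  - rewrite !lee_fin in hea e0 s0 *.
    move=> G0 H1 H2.
    have k1 : (n.+2%:R = k + 1)%R by rewrite /k -natr1.
    rewrite k1.
    have h1 : (k * (e - G) <= s)%R.
      have h : (e - G <= k^-1 * s)%R by rewrite lerBlDl.
      by rewrite -(ler_pM2l k0) mulVKf ?lt0r_neq0 in h.
    have kp : (0 < k + 1)%R by lra.
    have E : ((k+1) * ((r w)%:num / (k+1)) = (r w)%:num)%R.
      by rewrite mulrC divfK ?lt0r_neq0.
    have h2 : ((k+1) * (e - G) <= (k+1) * ((r w)%:num / (k+1)))%R.
      rewrite E; nra.
    rewrite (ler_pM2l kp) in h2; lra.
move: (hg v) (fun n => main n v); case: (g v) => [G| |] // G0 hm; last by rewrite leey.
have hb := hm 0%N; rewrite -EFinD in hb.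
have [e Ee] := fin_between (heta v) hb.
rewrite Ee lee_fin; apply/negPn/negP; rewrite -ltNge => hGe.
have eG : (0 < e - G)%R by lra.
set q := ((r v)%:num / (e - G))%R.
have hq := truncnS_gt q.
set m : R := (Num.truncn q).+1%:R in hq.
have m0 : (0 < m)%R by rewrite /m ltr0n.
have := hm (Num.truncn q); rewrite Ee -EFinD lee_fin -/m => hle.
have h3 : ((r v)%:num < m * (e - G))%R by rewrite -ltr_pdivrMr.
have h4 : ((r v)%:num / m < e - G)%R by rewrite ltr_pdivrMr // mulrC.
clearbody m q; move: hle h4; clear; move=> hle h4; lra.
Qed.
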